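(* Let $\mathbf{u}_1,\ldots,\mathbf{u}_n\in\mathbb{C}^d$ satisfy $\sum_{i=1}^n\mathbf{u}_i\mathbf{u}_i^*=\frac{n}{d}\cdot\mathbf{I}$. If $n\le 2d-1$, then for any $\varepsilon_1,\ldots,\varepsilon_n\in\{-1,1\}$, $$\Big\|\sum_{i=1}^n\varepsilon_i\mathbf{u}_i\mathbf{u}_i^*\Big\|=\frac{n}{d}.$$
   Context: $\|\cdot\|$ is the spectral norm. *)

(* Defs.v *)
From HB Require Import structures.
From mathcomp Require Import all_boot all_order all_algebra.
From mathcomp Require Import all_classical all_reals all_analysis.
From mathcomp Require Import complex spectral.
Set Implicit Arguments. Unset Strict Implicit. Unset Printing Implicit Defensive.
Import Order.TTheory GRing.Theory Num.Theory.
Local Open Scope ring_scope.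
Local Open Scope classical_set_scope.

Definition vnorm (R : realType) (d : nat) (x : 'cV[R[i]]_d) : R :=
  Num.sqrt (\sum_(k < d) (ComplexField.Normc.normc (x k ord0)) ^+ 2).

Definition spnorm (R : realType) (m n : nat) (A : 'M[R[i]]_(m, n)) : R :=
  sup [set vnorm (A *m x) | x in [set x : 'cV[R[i]]_n | vnorm x <= 1]].

(* Main.v *)
Require Import Defs.
From HB Require Import structures.
From mathcomp Require Import all_boot all_order all_algebra.
From mathcomp Require Import all_classical all_reals all_analysis.
From mathcomp Require Import complex spectral.
From mathcomp Require Import ring zify.
Import Order.TTheory GRing.Theory Num.Theory.
Local Open Scope ring_scope.
Local Open Scope sesquilinear_scope.
Section Aux.
Set Implicit Arguments. Unset Strict Implicit.
Variable R : realType.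
Local Notation C := R[i].
Local Notation "x %:C" := (real_complex R x) (format "x %:C").

Definition dot {d} (x y : 'cV[C]_d) : C := (x^t* *m y) 0 0.

Lemma trC_mul m n p (A : 'M[C]_(m,n)) (B : 'M[C]_(n,p)) :
  (A *m B)^t* = B^t* *m A^t*.
Proof. by rewrite trmx_mul map_mxM. Qed.

Lemma normc_C (z : C) : (ComplexField.Normc.normc z)%:C = `|z|.
Proof. by case: z. Qed.

Lemma normc_ge0 (z : C) : 0 <= ComplexField.Normc.normc z.
Proof. by case: z => a b; apply: sqrtr_ge0. Qed.

Lemma normc_real (r : R) : ComplexField.Normc.normc r%:C = `|r|.
Proof. by rewrite /= expr0n /= addr0 sqrtr_sqr. Qed.

Lemma vnorm_ge0 d (x : 'cV[C]_d) : 0 <= vnorm x.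
Proof. exact: sqrtr_ge0. Qed.

Lemma vnorm_sqC d (x : 'cV[C]_d) : ((vnorm x)^+2)%:C = dot x x.
Proof.
rewrite /vnorm sqr_sqrtr; last by apply: sumr_ge0 => k _; exact: sqr_ge0.
rewrite /dot mxE rmorph_sum /=; apply: eq_bigr => k _.
rewrite rmorphXn.
transitivity (`|x k ord0| ^+ 2); first by rewrite -normc_C.
by rewrite normCK !mxE mulrC.
Qed.

Lemma dot_ge0 d (x : 'cV[C]_d) : 0 <= dot x x.
Proof. by rewrite -vnorm_sqC ler0c sqr_ge0. Qed.

Lemma vnorm_le d (x y : 'cV[C]_d) (a : R) : 0 <= a ->
  dot y y <= (a ^+ 2)%:C * dot x x -> vnorm y <= a * vnorm x.
Proof.
move=> a0; rewrite -!vnorm_sqC -rmorphM lecR -exprMn => h.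
by rewrite -(ler_pXn2r (isT : (0 < 2)%N)) // nnegrE ?mulr_ge0 ?vnorm_ge0.
Qed.

Lemma vnorm_scale d (x : 'cV[C]_d) (z : C) :
  vnorm (z *: x) = ComplexField.Normc.normc z * vnorm x.
Proof.
rewrite /vnorm.
under eq_bigr do rewrite mxE ComplexField.Normc.normcM exprMn.
by rewrite -mulr_sumr sqrtrM ?sqr_ge0 // sqrtr_sqr ger0_norm ?normc_ge0.
Qed.

Lemma vnorm_eq0 d (x : 'cV[C]_d) : vnorm x = 0 -> x = 0.
Proof.
move=> /eqP; rewrite sqrtr_eq0 => h.
have h0 : \sum_(k < d) ComplexField.Normc.normc (x k ord0) ^+ 2 = 0.
  by apply/eqP; rewrite eq_le h sumr_ge0 // => k _; exact: sqr_ge0.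
apply/matrixP => k j; rewrite (ord1 j) mxE.
have := psumr_eq0P (fun k _ => sqr_ge0 _) h0 (isT : true) (i := k).
by move/eqP; rewrite expf_eq0 /= => /eqP/ComplexField.Normc.eq0_normc.
Qed.

Lemma dotDl d (x y z : 'cV[C]_d) : dot (x + y) z = dot x z + dot y z.
Proof. by rewrite /dot linearD /= map_mxD mulmxDl mxE. Qed.
Lemma dotDr d (x y z : 'cV[C]_d) : dot z (x + y) = dot z x + dot z y.
Proof. by rewrite /dot mulmxDr mxE. Qed.
Lemma dotNl d (x z : 'cV[C]_d) : dot (- x) z = - dot x z.
Proof. by rewrite /dot linearN /= map_mxN mulNmx mxE. Qed.
Lemma dotNr d (x z : 'cV[C]_d) : dot z (- x) = - dot z x.
Proof. by rewrite /dot mulmxN mxE. Qed.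
Lemma dotBl d (x y z : 'cV[C]_d) : dot (x - y) z = dot x z - dot y z.
Proof. by rewrite dotDl dotNl. Qed.
Lemma dotBr d (x y z : 'cV[C]_d) : dot z (x - y) = dot z x - dot z y.
Proof. by rewrite dotDr dotNr. Qed.
Lemma dotZl d (x z : 'cV[C]_d) a : dot (a *: x) z = a^* * dot x z.
Proof. by rewrite /dot linearZ /= map_mxZ -scalemxAl mxE. Qed.
Lemma dotZr d (x z : 'cV[C]_d) a : dot z (a *: x) = a * dot z x.
Proof. by rewrite /dot -scalemxAr mxE. Qed.

Definition psd {d} (A : 'M[C]_d) := forall y, 0 <= dot y (A *m y).

Lemma key d (A B : 'M[C]_d) c (HA : A^t* = A) (HB : B^t* = B)
  (pA : psd A) (pB : psd B) (hAB : A + B = c%:M) x :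
  0 <= c * dot (A *m x) (B *m x).
Proof.
have cx : c *: x = A *m x + B *m x by rewrite -mulmxDl hAB mul_scalar_mx.
have hB' : B = c%:M - A by rewrite -hAB addrC addKr.
have comm : A *m B = B *m A.
  by rewrite hB' mulmxBr mulmxBl mul_mx_scalar mul_scalar_mx.
rewrite -dotZr scalemxAr cx mulmxDr dotDr.
have -> : dot (A *m x) (B *m (B *m x)) = dot (B *m x) (A *m (B *m x)).
  rewrite /dot !trC_mul HA HB !mulmxA.
  by rewrite -[x^t* *m A *m B]mulmxA comm mulmxA.
exact: addr_ge0.
Qed.

Lemma bound d (A B : 'M[C]_d) c (HA : A^t* = A) (HB : B^t* = B)
  (pA : psd A) (pB : psd B) (hAB : A + B = c%:M) (hc : c^* = c) (c0 : 0 < c) x :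
  dot ((A - B) *m x) ((A - B) *m x) <= c ^+ 2 * dot x x.
Proof.
have k1 := key HA HB pA pB hAB x.
have hBA : B + A = c%:M by rewrite addrC.
have k2 := key HB HA pB pA hBA x.
have : 0 <= dot (A *m x) (B *m x) + dot (B *m x) (A *m x).
  by rewrite -(pmulr_rge0 _ c0) mulrDr addr_ge0.
have cx : c *: x = A *m x + B *m x by rewrite -mulmxDl hAB mul_scalar_mx.
have -> : c ^+ 2 * dot x x = dot (A *m x + B *m x) (A *m x + B *m x).
  by rewrite -cx dotZl dotZr hc mulrA expr2.
rewrite mulmxBl !(dotDl, dotDr, dotBl, dotBr, dotNl, dotNr) => h.
rewrite -subr_ge0.

set p := dot (A *m x) (A *m x); set q := dot (A *m x) (B *m x).
set r := dot (B *m x) (A *m x); set s := dot (B *m x) (B *m x).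
have -> : p + q + (r + s) - (p + - q + (- r + - - s)) = 2 * (q + r) by ring.
by rewrite mulr_ge0.
Qed.

Lemma herm_sum d n (u : 'I_n -> 'cV[C]_d) (P : pred 'I_n) :
  (\sum_(k | P k) u k *m (u k)^t*)^t* = \sum_(k | P k) u k *m (u k)^t*.
Proof.
rewrite raddf_sum /= map_mx_sum; apply: eq_bigr => k _.
by rewrite trC_mul trmxCK.
Qed.

Lemma psd_sum d n (u : 'I_n -> 'cV[C]_d) (P : pred 'I_n) :
  psd (\sum_(k | P k) u k *m (u k)^t*).
Proof.
move=> y; rewrite /dot mulmx_suml mulmx_sumr summxE; apply: sumr_ge0 => k _.
rewrite !mulmxA -mulmxA.
have -> : y^t* *m u k = ((u k)^t* *m y)^t* by rewrite trC_mul trmxCK.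
exact: dot_ge0.
Qed.

Lemma rank_sum d n (u : 'I_n -> 'cV[C]_d) (P : pred 'I_n) :
  (\rank (\sum_(k | P k) u k *m (u k)^t*)%R <= #|P|)%N.
Proof.
rewrite -sum1_card.
apply: (big_ind2 (fun (M : 'M[C]_d) (k : nat) => \rank M <= k)%N).
- by rewrite mxrank0.
- move=> M1 k1 M2 k2 h1 h2.
  have e1 := mxrankS (addmx_sub_adds (submx_refl M1) (submx_refl M2)).
  have e2 := (mxrank_adds_leqif M1 M2).1.
  by apply: leq_trans e1 (leq_trans e2 (leq_add h1 h2)).
- move=> k _; apply: leq_trans (mxrankM_maxr _ _) _; exact: rank_leq_row.
Qed.

Lemma ker_exists d (A : 'M[C]_d) : (\rank A < d)%N ->
  exists2 x : 'cV_d, x != 0 & A *m x = 0.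
Proof.
move=> h.
have : kermx A^T != 0.
  by rewrite -mxrank_eq0 mxrank_ker mxrank_tr subn_eq0 -ltnNge.
case/rowV0Pn => v /sub_kermxP hv nv.
exists v^T; first by rewrite trmx_eq0.
by rewrite -[A]trmxK -trmx_mul hv trmx0.
Qed.

Lemma sup_eq (S : set R) c : S c -> ubound S c -> sup S = c.
Proof.
move=> Sc ub; apply: le_anti; apply/andP; split.
  by apply: ge_sup; [exists c|].
by apply: (sup_upper_bound (E := S)); [split; exists c|].
Qed.

Lemma memb d (M : 'M[C]_d) (x : 'cV[C]_d) a :
  x != 0 -> M *m x = a *: x ->
  [set vnorm (M *m x) | x in [set x : 'cV[C]_d | vnorm x <= 1]]%classic
     (ComplexField.Normc.normc a).
Proof.
move=> nx hx.
have v0 : vnorm x != 0 by apply: contra nx => /eqP /vnorm_eq0 ->.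
have vs : vnorm (((vnorm x)^-1)%:C *: x) = 1.
  by rewrite vnorm_scale normc_real ger0_norm ?invr_ge0 ?vnorm_ge0 // mulVf.
exists (((vnorm x)^-1)%:C *: x); first by rewrite /= vs.
by rewrite -scalemxAr hx scalerA mulrC -scalerA vnorm_scale vs mulr1.
Qed.

End Aux.

Local Notation "x %:C" := (real_complex _ x) (format "x %:C").

Theorem lemma5p2 (R : realType) (d n : nat) (u : 'I_n -> 'cV[R[i]]_d)
  (hu : \sum_(k < n) u k *m (u k)^t* = (n%:R / d%:R : R[i])%:M)
  (hn : (n <= 2 * d - 1)%N)
  (eps : 'I_n -> R[i]) (heps : forall k, eps k = 1 \/ eps k = -1) :
  spnorm (\sum_(k < n) eps k *: (u k *m (u k)^t*)) = (n%:R / d%:R : R).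
Proof.
case: n u hu hn eps heps => [|n] u hu hn eps heps.
  rewrite big_ord0 mul0r; apply: sup_eq.
    exists 0; last by rewrite mul0mx -(scale0r (0 : 'cV[R[i]]_d)) vnorm_scale
      ComplexField.Normc.normc0 mul0r.
    by rewrite /= -(scale0r (0 : 'cV[R[i]]_d)) vnorm_scale
      ComplexField.Normc.normc0 mul0r ler01.
  move=> _ [x _ <-].
  by rewrite mul0mx -(scale0r (0 : 'cV[R[i]]_d)) vnorm_scale
      ComplexField.Normc.normc0 mul0r.
have d0 : (0 < d)%N by lia.
set r : R := n.+1%:R / d%:R.
have r0 : 0 < r by rewrite divr_gt0 // ltr0n.
set M := \sum_(k < n.+1) _.
pose P1 := (fun k => eps k == 1) : pred 'I_n.+1.
pose P2 := (fun k => eps k != 1) : pred 'I_n.+1.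
pose A := \sum_(k < n.+1 | P1 k) u k *m (u k)^t*.
pose B := \sum_(k < n.+1 | P2 k) u k *m (u k)^t*.
have cE : (n.+1%:R / d%:R : R[i]) = r%:C.
  by rewrite /r rmorphM /= fmorphV /= !rmorph_nat.
have hAB : A + B = (r%:C)%:M by rewrite -cE -hu (bigID P1).
have hM : M = A - B.
  rewrite /M (bigID P1) /= -sumrN; congr (_ + _); apply: eq_bigr => k hk.
    by rewrite (eqP hk) scale1r.
  move: hk; rewrite /P1 /=; case: (heps k) => ->; rewrite ?eqxx // => _.
  by rewrite scaleN1r.
have HA := herm_sum u P1.
have HB := herm_sum u P2.
have pA := psd_sum u P1.
have pB := psd_sum u P2.
have hc : (r%:C)^* = r%:C by exact: conjc_real.
have c0 : 0 < r%:C by rewrite ltcR.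
rewrite /spnorm; apply: sup_eq.
  have hcard : (#|P1| + #|P2| = n.+1)%N.
    rewrite -[RHS](card_ord n.+1) -(cardC P1); congr (_ + _).
  have [hs|hs] : (#|P1| < d)%N \/ (#|P2| < d)%N by lia.
    have [x nx hx] := ker_exists (leq_ltn_trans (rank_sum u P1) hs).
    have := memb (M := M) (a := - r%:C) nx.
    rewrite -rmorphN normc_real normrN ger0_norm ?(ltW r0) //; apply.
    have : (A + B) *m x = r%:C *: x by rewrite hAB mul_scalar_mx.
    rewrite hM mulmxDl mulmxBl hx add0r sub0r => ->.
    by rewrite rmorphN scaleNr.
  have [x nx hx] := ker_exists (leq_ltn_trans (rank_sum u P2) hs).
  have := memb (M := M) (a := r%:C) nx.
  rewrite normc_real ger0_norm ?(ltW r0) //; apply.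
  have : (A + B) *m x = r%:C *: x by rewrite hAB mul_scalar_mx.
  by rewrite hM mulmxDl mulmxBl hx addr0 subr0 => ->.
move=> _ [x hx <-].
have ub : vnorm (M *m x) <= r * vnorm x.
  apply: vnorm_le; first exact: ltW.
  rewrite hM rmorphXn; exact: bound HA HB pA pB hAB hc c0 x.
apply: le_trans ub _.
by rewrite -[leRHS]mulr1 ler_wpM2l // ltW.
Qed.
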